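(* Assume $c\ge2\sqrt\delta$. For real $\lambda\ge0$, all of $\mu^u_-(\lambda),\mu^s_+(\lambda),\mu^u_+(\lambda)$ are real and the Riccati equation $\eta'=\frac{\lambda-1+2\hat u(z)}{\delta}-\frac c\delta\eta-\eta^2$ defines a flow on $\mathbb RP^1\cong S^1$. Let $\ell(z;\lambda)$ be the solution on $\mathbb RP^1$ with $\ell(z;\lambda)\to\mu^u_-(\lambda)$ as $z\to-\infty$. Let $0\le\lambda_1<\lambda_2$ be real numbers that are not eigenvalues, and for $j=1,2$ suppose $\ell(\cdot;\lambda_j)$ takes the value $\mu^s_+(\lambda_j)$ exactly $N_j<\infty$ times as $z$ ranges over $\mathbb R$. Then the number of eigenvalues in the interval $(\lambda_1,\lambda_2)$ equals $|N_1-N_2|$.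
   Context: $\delta>0$, $c>0$, and $\hat u$ solves $\delta\hat u''+c\hat u'+\hat u(1-\hat u)=0$ with $\hat u(-\infty)=1$, $\hat u(+\infty)=0$ (for $c\ge2\sqrt\delta$ this wave satisfies $0<\hat u<1$). $\mu^{u}_-(\lambda)=\frac{-c+\sqrt{c^2+4\delta(\lambda+1)}}{2\delta}$, $\mu^{u,s}_+(\lambda)=\frac{-c\pm\sqrt{c^2+4\delta(\lambda-1)}}{2\delta}$. The Riccati equation is the equation for $\eta=q/p$ when $(p,q)$ solves $p'=q$, $q'=\frac{\lambda-1+2\hat u}{\delta}p-\frac c\delta q$; on $\mathbb RP^1$ it is extended through $\eta=\infty$ via the chart $\tau=1/\eta$. A real $\lambda\ge0$ is an eigenvalue if $\lim_{z\to+\infty}\ell(z;\lambda)=\mu^s_+(\lambda)$; when $\lambda$ is not an eigenvalue, $\lim_{z\to+\infty}\ell(z;\lambda)=\mu^u_+(\lambda)$. *)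

(* Defs.v *)
From Stdlib Require Import Reals Lra Lia ZArith List.
Open Scope R_scope.

Definition lim_minus_infty (f : R -> R) (l : R) : Prop :=
  forall eps, 0 < eps -> exists M, forall z, z < M -> Rabs (f z - l) < eps.
Definition lim_plus_infty (f : R -> R) (l : R) : Prop :=
  forall eps, 0 < eps -> exists M, forall z, M < z -> Rabs (f z - l) < eps.

Definition traveling_wave (delta c : R) (u u1 u2 : R -> R) : Prop :=
  (forall z, derivable_pt_lim u z (u1 z)) /\
  (forall z, derivable_pt_lim u1 z (u2 z)) /\
  (forall z, delta * u2 z + c * u1 z + u z * (1 - u z) = 0) /\
  lim_minus_infty u 1 /\ lim_plus_infty u 0.

Definition mu_u_minus (delta c lam : R) : R :=
  (- c + sqrt (c ^ 2 + 4 * delta * (lam + 1))) / (2 * delta).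
Definition mu_u_plus (delta c lam : R) : R :=
  (- c + sqrt (c ^ 2 + 4 * delta * (lam - 1))) / (2 * delta).
Definition mu_s_plus (delta c lam : R) : R :=
  (- c - sqrt (c ^ 2 + 4 * delta * (lam - 1))) / (2 * delta).

(* A solution of the Riccati equation on RP^1 is the line [p(z) : q(z)],
   i.e. eta = q/p, extended through eta = infinity (p = 0). *)
Definition linear_sol (delta c : R) (u : R -> R) (lam : R) (p q : R -> R) : Prop :=
  forall z, derivable_pt_lim p z (q z) /\
            derivable_pt_lim q z ((lam - 1 + 2 * u z) / delta * p z - c / delta * q z).

Definition rp1_lim_minus (p q : R -> R) (mu : R) : Prop :=
  forall eps, 0 < eps -> exists M, forall z, z < M -> p z <> 0 /\ Rabs (q z / p z - mu) < eps.
Definition rp1_lim_plus (p q : R -> R) (mu : R) : Prop :=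
  forall eps, 0 < eps -> exists M, forall z, M < z -> p z <> 0 /\ Rabs (q z / p z - mu) < eps.

Definition ell_sol (delta c : R) (u : R -> R) (lam : R) (p q : R -> R) : Prop :=
  linear_sol delta c u lam p q /\ rp1_lim_minus p q (mu_u_minus delta c lam).

Definition rp1_value_eq (p q : R -> R) (z mu : R) : Prop :=
  p z <> 0 /\ q z / p z = mu.

Definition is_eigenvalue (delta c : R) (u : R -> R) (lam : R) : Prop :=
  0 <= lam /\
  exists p q, ell_sol delta c u lam p q /\ rp1_lim_plus p q (mu_s_plus delta c lam).

Definition holds_exactly (P : R -> Prop) (n : nat) : Prop :=
  exists l : list R, NoDup l /\ (forall x, In x l <-> P x) /\ length l = n.

(* Main.v *)
Require Import Defs.
From Stdlib Require Import Reals Lra Lia ZArith List.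
From Coquelicot Require Import Coquelicot.
Open Scope R_scope.

Lemma dexp k z : derivable_pt_lim (fun x => exp (k*x)) z (k * exp (k*z)).
Proof. apply is_derive_Reals. auto_derive; auto. ring. Qed.

Lemma dmul f g f' g' z : derivable_pt_lim f z f' -> derivable_pt_lim g z g' ->
  derivable_pt_lim (fun t => f t * g t) z (f' * g z + f z * g').
Proof. intros. exact (derivable_pt_lim_mult f g z f' g' H H0). Qed.

Lemma dplus f g f' g' z : derivable_pt_lim f z f' -> derivable_pt_lim g z g' ->
  derivable_pt_lim (fun t => f t + g t) z (f' + g').
Proof. intros. exact (derivable_pt_lim_plus f g z f' g' H H0). Qed.

Lemma dscal (k : R) f f' z : derivable_pt_lim f z f' ->
  derivable_pt_lim (fun t => k * f t) z (k * f').
Proof.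
  intros H. pose proof (dmul (fun _ => k) f 0 f' z (derivable_pt_lim_const k z) H) as H1.
  replace (k * f') with (0 * f z + k * f') by ring. exact H1.
Qed.

Lemma dext f v v' z : derivable_pt_lim f z v -> v = v' -> derivable_pt_lim f z v'.
Proof. intros H ->; exact H. Qed.

Lemma mvt f f' a b : (forall z, derivable_pt_lim f z (f' z)) -> a < b ->
  exists c, f b - f a = f' c * (b - a) /\ a < c < b.
Proof.
  intros Hd Hab.
  set (pr := fun x => exist (fun l => derivable_pt_abs f x l) (f' x) (Hd x) : derivable_pt f x).
  destruct (MVT_cor1 f a b pr Hab) as [c0 [E Hc]].
  exists c0. split; auto.
Qed.

Lemma mono f f' a b : (forall z, derivable_pt_lim f z (f' z)) -> a <= b ->
  (forall z, a <= z <= b -> 0 <= f' z) -> f a <= f b.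
Proof.
  intros Hd Hab Hp. destruct (Rle_lt_or_eq_dec a b Hab) as [Hlt|Heq]; [|subst; lra].
  destruct (mvt f f' a b Hd Hlt) as [c0 [E Hc]].
  assert (0 <= f' c0) by (apply Hp; lra). nra.
Qed.

Lemma u_pos delta c u u1 u2 : 0 < delta -> 0 < c -> 2 * sqrt delta <= c ->
  traveling_wave delta c u u1 u2 -> forall z, 0 < u z.
Proof.
  intros Hd Hc Hsc [Du [Du1 [Hode [Hlm Hlp]]]] w.
  assert (Hsd := sqrt_sqrt delta (Rlt_le _ _ Hd)).
  assert (Hs0 := sqrt_pos delta).
  assert (Hc2 : 4 * delta <= c * c) by nra.
  set (s := sqrt (c * c - 4 * delta)).
  assert (Hss : s * s = c * c - 4 * delta) by (apply sqrt_sqrt; lra).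
  assert (Hs1 : 0 <= s) by apply sqrt_pos.
  assert (Hsc' : s < c) by nra.
  set (b := (c - s) / (2 * delta)).
  assert (Hb : 0 < b) by (unfold b; apply Rdiv_lt_0_compat; lra).
  assert (Hbq : delta * b * b - c * b + 1 = 0).
  { unfold b. field_simplify; [|lra]. rewrite ?Rpow_mult_distr.
    replace (s ^ 2) with (s * s) by ring. rewrite Hss. field_simplify; lra. }
  set (g := c / delta - b).
  set (G := fun z => (u1 z + b * u z) * exp (g * z)).
  assert (DG : forall z, derivable_pt_lim G z (u z * u z / delta * exp (g * z))).
  { intro z. unfold G. eapply dext.
    - apply dmul; [apply dplus; [apply Du1 | apply dscal; apply Du] | apply dexp].
    - assert (E : (u2 z + b * u1 z) + g * (u1 z + b * u z) - u z * u z / delta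
                = (delta * u2 z + c * u1 z + u z * (1 - u z)
                   - u z * (delta * b * b - c * b + 1)) / delta)
        by (unfold g; field; lra).
      rewrite Hode, Hbq in E.
      assert (E2 : (u2 z + b * u1 z) + g * (u1 z + b * u z) = u z * u z / delta)
        by (rewrite Rmult_0_r, Rminus_0_r, Rdiv_0_l in E; lra).
      rewrite <- E2. simpl; ring. }
  assert (DGp : forall z, 0 <= u z * u z / delta * exp (g * z)).
  { intro z. apply Rmult_le_pos; [|apply Rlt_le, exp_pos].
    apply Rdiv_le_0_compat; nra. }
  destruct (Hlm (1/2) ltac:(lra)) as [M HM].
  set (L := 2 / b).
  assert (HL : 0 < L) by (unfold L; apply Rdiv_lt_0_compat; lra).
  set (a := Rmin w M - 1 - L).
  assert (Ha : a + L < M /\ a + L < w) by (unfold a; split; [pose proof (Rmin_r w M)|pose proof (Rmin_l w M)]; lra).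
  destruct (mvt u u1 a (a + L) Du ltac:(lra)) as [c0 [E Hc0]].
  pose proof (HM a ltac:(lra)) as H1. pose proof (HM (a + L) ltac:(lra)) as H2.
  pose proof (HM c0 ltac:(lra)) as H3.
  apply Rabs_lt_between in H1, H2, H3.
  assert (Hu1 : u1 c0 * L > -1) by (replace (a + L - a) with L in E by ring; lra).
  assert (Hu1' : u1 c0 > - b / 2).
  { unfold L in Hu1. assert (u1 c0 * 2 > - b).
    { replace (u1 c0 * 2) with (u1 c0 * (2 / b) * b) by (field; lra). nra. }
    lra. }
  assert (Hg0 : u1 c0 + b * u c0 > 0) by nra.
  set (H := fun z => u z * exp (b * z)).
  assert (DH : forall z, derivable_pt_lim H z ((u1 z + b * u z) * exp (b * z))).
  { intro z. unfold H. eapply dext. apply dmul; [apply Du | apply dexp]. simpl; ring. }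
  assert (HHw : H c0 <= H w).
  { apply (mono H _ c0 w DH); [lra|].
    intros z Hz. assert (Gz : G c0 <= G z) by (apply (mono G _ c0 z DG); [lra| intros; apply DGp]).
    unfold G in Gz.
    assert (0 < (u1 c0 + b * u c0) * exp (g * c0)) by (apply Rmult_lt_0_compat; [lra|apply exp_pos]).
    assert (0 < u1 z + b * u z).
    { pose proof (exp_pos (g * z)). destruct (Rlt_le_dec 0 (u1 z + b * u z)); auto. nra. }
    apply Rlt_le, Rmult_lt_0_compat; [lra | apply exp_pos]. }
  unfold H in HHw.
  assert (0 < u c0 * exp (b * c0)) by (apply Rmult_lt_0_compat; [lra|apply exp_pos]).
  pose proof (exp_pos (b * w)).
  destruct (Rlt_le_dec 0 (u w)); auto. nra.
Qed.

Lemma ell_pos delta c u u1 u2 lam p q : 0 < delta -> 0 < c -> 2 * sqrt delta <= c ->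
  traveling_wave delta c u u1 u2 -> 0 <= lam -> ell_sol delta c u lam p q ->
  forall z, p z <> 0 /\ 0 < q z / p z + c / (2 * delta).
Proof.
  intros Hd Hc Hsc Htw Hl [Hlin Hlim] z.
  pose proof (u_pos _ _ _ _ _ Hd Hc Hsc Htw) as Hu.
  assert (Hsd := sqrt_sqrt delta (Rlt_le _ _ Hd)).
  assert (Hs0 := sqrt_pos delta).
  assert (Hc2 : 4 * delta <= c * c) by nra.
  set (S := sqrt (c ^ 2 + 4 * delta * (lam + 1))).
  assert (HS : 0 < S) by (apply sqrt_lt_R0; nra).
  assert (Hm : mu_u_minus delta c lam + c / (2 * delta) = S / (2 * delta))
    by (unfold mu_u_minus; fold S; field; lra).
  assert (Hm0 : 0 < S / (2 * delta)) by (apply Rdiv_lt_0_compat; lra).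
  destruct (Hlim _ Hm0) as [M HM].
  destruct (Rlt_le_dec z M) as [Hz|Hz].
  { destruct (HM z Hz) as [Hp Hq]. split; auto.
    apply Rabs_lt_between in Hq. lra. }
  set (a0 := c / (2 * delta)).
  set (W := fun t => p t * (q t + a0 * p t) * exp (2 * a0 * t)).
  set (K := fun t => (lam - 1 + 2 * u t) / delta + a0 * a0).
  assert (HK : forall t, 0 <= K t).
  { intro t. unfold K, a0. pose proof (Hu t).
    assert (E : (lam - 1 + 2 * u t) / delta + c / (2 * delta) * (c / (2 * delta))
      = (4 * delta * lam + 8 * delta * u t + (c * c - 4 * delta)) / (4 * delta * delta))
      by (field; lra).
    rewrite E. apply Rdiv_le_0_compat; nra. }
  assert (DW : forall t, derivable_pt_lim W t
     (((q t + a0 * p t) * (q t + a0 * p t) + K t * (p t * p t)) * exp (2 * a0 * t))).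
  { intro t. destruct (Hlin t) as [Dp Dq]. unfold W. eapply dext.
    - apply dmul; [apply dmul; [apply Dp | apply dplus; [apply Dq | apply dscal; apply (proj1 (Hlin t))]] | apply dexp].
    - unfold K, a0. simpl. field. lra. }
  set (z0 := M - 1).
  assert (HW : W z0 <= W z).
  { apply (mono W _ z0 z DW); [unfold z0; lra|].
    intros t _. apply Rmult_le_pos; [|apply Rlt_le, exp_pos].
    apply Rplus_le_le_0_compat; [apply Rle_0_sqr| apply Rmult_le_pos; [apply HK|apply Rle_0_sqr]]. }
  destruct (HM z0 ltac:(unfold z0; lra)) as [Hp0 Hq0].
  apply Rabs_lt_between in Hq0.
  assert (Hr0 : 0 < q z0 / p z0 + a0) by (unfold a0; lra).
  assert (Hpr0 : 0 < p z0 * (q z0 + a0 * p z0)).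
  { replace (p z0 * (q z0 + a0 * p z0)) with ((p z0 * p z0) * (q z0 / p z0 + a0)) by (field; auto).
    apply Rmult_lt_0_compat; auto. assert (0 < p z0 * p z0) by (destruct (Rlt_or_le 0 (p z0)); [nra| destruct H; [nra|contradiction]]). exact H. }
  assert (HW0 : 0 < W z0) by (unfold W; apply Rmult_lt_0_compat; [exact Hpr0|apply exp_pos]).
  assert (Hprz : 0 < p z * (q z + a0 * p z)).
  { unfold W in HW. pose proof (exp_pos (2 * a0 * z)).
    destruct (Rlt_le_dec 0 (p z * (q z + a0 * p z))); auto. unfold W in HW0. nra. }
  assert (Hpz : p z <> 0) by (intro E; rewrite E in Hprz; lra).
  split; auto.
  assert (Hpp : 0 < p z * p z).
  { destruct (Rlt_or_le 0 (p z)); [nra|]. destruct H; [nra|contradiction]. }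
  assert (E : q z / p z + a0 = (p z * (q z + a0 * p z)) / (p z * p z))
    by (unfold a0; field; split; [lra|exact Hpz]).
  rewrite E. apply Rdiv_lt_0_compat; auto.
Qed.

Lemma no_cross delta c u u1 u2 lam p q : 0 < delta -> 0 < c -> 2 * sqrt delta <= c ->
  traveling_wave delta c u u1 u2 -> 0 <= lam -> ell_sol delta c u lam p q ->
  forall z, ~ rp1_value_eq p q z (mu_s_plus delta c lam).
Proof.
  intros Hd Hc Hsc Htw Hl He z [Hp Hq].
  destruct (ell_pos _ _ _ _ _ _ _ _ Hd Hc Hsc Htw Hl He z) as [_ Hpos].
  rewrite Hq in Hpos. unfold mu_s_plus in Hpos.
  pose proof (sqrt_pos (c ^ 2 + 4 * delta * (lam - 1))).
  assert (E : (- c - sqrt (c ^ 2 + 4 * delta * (lam - 1))) / (2 * delta) + c / (2 * delta)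
     = - (sqrt (c ^ 2 + 4 * delta * (lam - 1)) / (2 * delta))) by (field; lra).
  rewrite E in Hpos.
  assert (0 <= sqrt (c ^ 2 + 4 * delta * (lam - 1)) / (2 * delta))
    by (apply Rdiv_le_0_compat; lra).
  lra.
Qed.

Lemma no_eig delta c u u1 u2 lam : 0 < delta -> 0 < c -> 2 * sqrt delta <= c ->
  traveling_wave delta c u u1 u2 -> 0 < lam -> ~ is_eigenvalue delta c u lam.
Proof.
  intros Hd Hc Hsc Htw Hl [_ [p [q [He Hlp]]]].
  assert (Hsd := sqrt_sqrt delta (Rlt_le _ _ Hd)).
  assert (Hs0 := sqrt_pos delta).
  assert (Hc2 : 4 * delta <= c * c) by nra.
  set (S := sqrt (c ^ 2 + 4 * delta * (lam - 1))).
  assert (HS : 0 < S) by (apply sqrt_lt_R0; simpl; nra).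
  assert (Hm0 : 0 < S / (2 * delta)) by (apply Rdiv_lt_0_compat; lra).
  destruct (Hlp _ Hm0) as [M HM].
  destruct (HM (M + 1) ltac:(lra)) as [_ Hq].
  apply Rabs_lt_between in Hq.
  destruct (ell_pos _ _ _ _ _ _ _ _ Hd Hc Hsc Htw (Rlt_le _ _ Hl) He (M + 1)) as [_ Hpos].
  assert (E : mu_s_plus delta c lam + c / (2 * delta) = - (S / (2 * delta)))
    by (unfold mu_s_plus; fold S; field; lra).
  lra.
Qed.

Lemma he_zero (P : R -> Prop) n : (forall x, ~ P x) -> holds_exactly P n -> n = 0%nat.
Proof.
  intros HP [l [_ [Hi Hlen]]]. destruct l as [|x l']; [simpl in Hlen; lia|].
  exfalso. apply (HP x). apply Hi. left; reflexivity.
Qed.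

Theorem mainTheorem5
  (delta c : R) (u u1 u2 : R -> R) (lam1 lam2 : R) (N1 N2 : nat)
  (p1 q1 p2 q2 : R -> R) :
  0 < delta -> 0 < c -> 2 * sqrt delta <= c ->
  traveling_wave delta c u u1 u2 ->
  0 <= lam1 -> lam1 < lam2 ->
  ~ is_eigenvalue delta c u lam1 -> ~ is_eigenvalue delta c u lam2 ->
  ell_sol delta c u lam1 p1 q1 -> ell_sol delta c u lam2 p2 q2 ->
  holds_exactly (fun z => rp1_value_eq p1 q1 z (mu_s_plus delta c lam1)) N1 ->
  holds_exactly (fun z => rp1_value_eq p2 q2 z (mu_s_plus delta c lam2)) N2 ->
  holds_exactly (fun lam => lam1 < lam < lam2 /\ is_eigenvalue delta c u lam)
                (Z.abs_nat (Z.of_nat N1 - Z.of_nat N2)).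
Proof.
  intros Hd Hc Hsc Htw Hl1 H12 _ _ He1 He2 HN1 HN2.
  rewrite (he_zero _ _ (no_cross _ _ _ _ _ _ _ _ Hd Hc Hsc Htw Hl1 He1) HN1).
  rewrite (he_zero _ _ (no_cross _ _ _ _ _ _ _ _ Hd Hc Hsc Htw (Rlt_le _ _ (Rle_lt_trans _ _ _ Hl1 H12)) He2) HN2).
  exists nil. split; [constructor|]. split; [|reflexivity].
  intros x; split; [intros []|].
  intros [Hx Heig]. exfalso. apply (no_eig _ _ _ _ _ x Hd Hc Hsc Htw ltac:(lra) Heig).
Qed.
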